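(* Let $G=(X,\Sigma,\longrightarrow,X_0)$ and $R=(Z,\Sigma,\longrightarrow,Z_0)$ be automata. If $\Phi$ is a $\Sigma_{ucr}$-simulation from $G$ to $R$ that is uniform w.r.t. $\Sigma_r$, then there exists a $\Sigma_{ucr}$-controllability set from $G$ to $R$.
   Context: An automaton is a 4-tuple $A=(Q,\Sigma,\longrightarrow,Q_0)$ with state set $Q$, finite event set $\Sigma$, ${\longrightarrow}\subseteq Q\times\Sigma\times Q$ and $\emptyset\neq Q_0\subseteq Q$; write $q\xrightarrow{\sigma}q'$ for $(q,\sigma,q')\in{\longrightarrow}$, $q\xrightarrow{\sigma}$ if some such $q'$ exists, extended to strings. A state $q$ is $s$-reachable ($s\in\Sigma^*$) if $q_0\xrightarrow{s}q$ for some initial $q_0$. Events are partitioned into uncontrollable $\Sigma_{uc}$ and controllable $\Sigma_c$; $\Sigma_r\subseteq\Sigma$ is a fixed set of required events. $\Phi\subseteq X\times Z$ is a $\Sigma_{ucr}$-simulation from $G$ to $R$ if (initial state) every $x_0\in X_0$ has $z_0\in Z_0$ with $(x_0,z_0)\in\Phi$; ($\Sigma_{uc}$-forward) for $(x,z)\in\Phi$, $\sigma\in\Sigma_{uc}$, $x\xrightarrow{\sigma}x'$ there is $z'$ with $z\xrightarrow{\sigma}z'$, $(x',z')\in\Phi$; ($\Sigma_r$-backward) for $(x,z)\in\Phi$, $\sigma\in\Sigma_r$, $z\xrightarrow{\sigma}z'$ there is $x'$ with $x\xrightarrow{\sigma}x'$, $(x',z')\in\Phi$. Such $\Phi$ is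 uniform w.r.t. $\Sigma_r$ if for any $(x_1,z_1),(x_2,z_2)\in\Phi$ such that, for some $s\in\Sigma^*$, $x_1,x_2$ are $s$-reachable in $G$ and $z_1,z_2$ are $s$-reachable in $R$: for all $\sigma\in\Sigma_r$ and $x_2'$, if $z_1\xrightarrow{\sigma}$ and $x_2\xrightarrow{\sigma}x_2'$ then there is $z_2'$ with $z_2\xrightarrow{\sigma}z_2'$ and $(x_2',z_2')\in\Phi$. For $W,W'\subseteq X\times Z$: $\mathit{match}_{G,R}(W,\sigma,W')$ iff for all $(x,z)\in W$ and $x\xrightarrow{\sigma}x'$ there is $z'$ with $z\xrightarrow{\sigma}z'$ and $(x',z')\in W'$. $E\subseteq\wp(X\times Z)$ is a $\Sigma_{ucr}$-controllability set from $G$ to $R$ if: (istate) some $W_0\in E$ satisfies $\forall x_0\in X_0\,\exists z_0\in Z_0\,((x_0,z_0)\in W_0)$; (a) for every $W\in E$, $\sigma\in\Sigma_{uc}$ there is $W'\in E$ with $\mathit{match}_{G,R}(W,\sigma,W')$; (b) for every $W\in E$, $(x,z)\in W$, $\sigma\in\Sigma_r$, $z\xrightarrow{\sigma}z'$, there exist $x'$, $W'\in E$ with $x\xrightarrow{\sigma}x'$, $(x',z')\in W'$, $\mathit{match}_{G,R}(W,\sigma,W')$. *)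

(* Defs.v *)
From Stdlib Require Import List.

Record automaton (Ev : Type) := Automaton {
  st : Type;
  trans : st -> Ev -> st -> Prop;
  init : st -> Prop;
  init_nonempty : exists q, init q
}.
Arguments st {Ev}.
Arguments trans {Ev}.
Arguments init {Ev}.

Definition finite_events (Ev : Type) : Prop := exists l : list Ev, forall e, In e l.

Inductive trans_str {Ev} (A : automaton Ev) : st A -> list Ev -> st A -> Prop :=
| ts_nil : forall q, trans_str A q nil q
| ts_cons : forall q q' q'' e s,
    trans A q e q' -> trans_str A q' s q'' -> trans_str A q (e :: s) q''.

Definition reachable {Ev} (A : automaton Ev) (s : list Ev) (q : st A) : Prop :=
  exists q0, init A q0 /\ trans_str A q0 s q.

Section Sim.
Context {Ev : Type} (Suc Sr : Ev -> Prop) (G R : automaton Ev).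

Definition ucr_simulation (Phi : st G -> st R -> Prop) : Prop :=
  (forall x0, init G x0 -> exists z0, init R z0 /\ Phi x0 z0) /\
  (forall x z e x', Phi x z -> Suc e -> trans G x e x' ->
     exists z', trans R z e z' /\ Phi x' z') /\
  (forall x z e z', Phi x z -> Sr e -> trans R z e z' ->
     exists x', trans G x e x' /\ Phi x' z').

Definition uniform (Phi : st G -> st R -> Prop) : Prop :=
  forall x1 z1 x2 z2 (s : list Ev),
    Phi x1 z1 -> Phi x2 z2 ->
    reachable G s x1 -> reachable G s x2 ->
    reachable R s z1 -> reachable R s z2 ->
    forall e x2', Sr e -> (exists z1', trans R z1 e z1') -> trans G x2 e x2' ->
      exists z2', trans R z2 e z2' /\ Phi x2' z2'.

Definition match_ (W : st G -> st R -> Prop) (e : Ev) (W' : st G -> st R -> Prop) : Prop :=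
  forall x z x', W x z -> trans G x e x' -> exists z', trans R z e z' /\ W' x' z'.

Definition controllability_set (E : (st G -> st R -> Prop) -> Prop) : Prop :=
  (exists W0, E W0 /\ forall x0, init G x0 -> exists z0, init R z0 /\ W0 x0 z0) /\
  (forall W e, E W -> Suc e -> exists W', E W' /\ match_ W e W') /\
  (forall W x z e z', E W -> W x z -> Sr e -> trans R z e z' ->
     exists x' W', trans G x e x' /\ E W' /\ W' x' z' /\ match_ W e W').
End Sim.

(* Main.v *)
Require Import Defs.
From Stdlib Require Import List.
Import ListNotations.

Lemma ts_snoc {Ev} (A : automaton Ev) q s q' e q'' :
  trans_str A q s q' -> trans A q' e q'' -> trans_str A q (s ++ [e]) q''.
Proof.
  induction 1; intros Hn; simpl.
  - econstructor; [exact Hn | constructor].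
  - econstructor; [exact H | auto].
Qed.

Lemma reach_snoc {Ev} (A : automaton Ev) s q e q' :
  reachable A s q -> trans A q e q' -> reachable A (s ++ [e]) q'.
Proof.
  intros [q0 [Hi Ht]] H. exists q0. split; [exact Hi|]. eapply ts_snoc; eauto.
Qed.

Theorem lemma5 (Ev : Type) (Hfin : finite_events Ev)
  (Suc Sr : Ev -> Prop) (G R : automaton Ev)
  (Phi : st G -> st R -> Prop) :
  ucr_simulation Suc Sr G R Phi -> uniform Sr G R Phi ->
  exists E, controllability_set Suc Sr G R E.
Proof.
  intros [Hi [Hf Hb]] Hu.
  exists (fun W => exists s, W = (fun x z => Phi x z /\ reachable G s x /\ reachable R s z)).
  split; [|split].
  - eexists. split. exists nil. reflexivity.
    intros x0 H0. destruct (Hi x0 H0) as [z0 [Hz Hp]]. exists z0. split; auto.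
    split; auto. split; exists x0 + exists z0; split; auto; constructor.
  - intros W e [s ->] He. eexists. split. exists (s ++ [e]). reflexivity.
    intros x z x' [Hp [Hx Hz]] Ht. destruct (Hf x z e x' Hp He Ht) as [z' [Ht' Hp']].
    exists z'. split; auto. split; auto. split; eapply reach_snoc; eauto.
  - intros W x z e z' [s ->] [Hp [Hx Hz]] He Ht.
    destruct (Hb x z e z' Hp He Ht) as [x' [Hx' Hp']].
    exists x'. eexists. split; [exact Hx'|]. split. exists (s ++ [e]). reflexivity.
    split. split; auto. split; eapply reach_snoc; eauto.
    intros x2 z2 x2' [Hp2 [Hx2 Hz2]] Ht2.
    destruct (Hu x z x2 z2 s Hp Hp2 Hx Hx2 Hz Hz2 e x2' He (ex_intro _ z' Ht) Ht2) as [z2' [Hz2' Hp2']].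
    exists z2'. split; auto. split; auto. split; eapply reach_snoc; eauto.
Qed.
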